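(* Let $G$ be a Garside group with Garside element $\Delta$, let $m$ be the smallest positive integer such that $\Delta^m$ is central in $G$, and let $G_\Delta=G/\langle\Delta^m\rangle$. Then every finite subgroup of $G_\Delta$ is cyclic.
   Context: $G$ is a Garside group: the group of fractions of a Garside monoid $G^+$ (an atomic, left and right cancellative monoid that is a lattice under both the prefix order $\le_L$ and the suffix order $\le_R$, with a Garside element $\Delta$ whose left and right divisors coincide, form a finite set, and generate $G^+$). Some positive power of $\Delta$ is always central in $G$, so $m$ is well defined; $\langle\Delta^m\rangle$ denotes the (normal) cyclic subgroup generated by $\Delta^m$. *)

(* Defs.v *)
From Stdlib Require Import ZArith List.
Import ListNotations.
Set Implicit Arguments.

Record Group := {
  carrier :> Type;
  gmul : carrier -> carrier -> carrier;
  gone : carrier;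
  ginv : carrier -> carrier;
  gmul_assoc : forall x y z, gmul x (gmul y z) = gmul (gmul x y) z;
  gmul_1l : forall x, gmul gone x = x;
  gmul_1r : forall x, gmul x gone = x;
  gmul_Vl : forall x, gmul (ginv x) x = gone;
  gmul_Vr : forall x, gmul x (ginv x) = gone
}.

Arguments gmul {g}.
Arguments gone {g}.
Arguments ginv {g}.

Fixpoint gpow {G : Group} (x : G) (n : nat) : G :=
  match n with
  | O => gone
  | S k => gmul x (gpow x k)
  end.

Definition gpowZ {G : Group} (x : G) (z : Z) : G :=
  match z with
  | Z0 => gone
  | Zpos p => gpow x (Pos.to_nat p)
  | Zneg p => ginv (gpow x (Pos.to_nat p))
  end.

Definition gprod {G : Group} (l : list G) : G := fold_right gmul gone l.

Definition central {G : Group} (x : G) : Prop := forall g : G, gmul g x = gmul x g.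

Definition is_subgroup {G : Group} (H : G -> Prop) : Prop :=
  H gone /\ (forall x y, H x -> H y -> H (gmul x y)) /\ (forall x, H x -> H (ginv x)).

Definition finite_set {T : Type} (H : T -> Prop) : Prop :=
  exists l : list T, forall x, H x -> In x l.

Definition is_cyclic {G : Group} (H : G -> Prop) : Prop :=
  exists g, H g /\ forall x, H x -> exists k : Z, x = gpowZ g k.

Definition is_hom {G Q : Group} (f : G -> Q) : Prop :=
  forall x y, f (gmul x y) = gmul (f x) (f y).

Definition cyclic_subgroup {G : Group} (x : G) (g : G) : Prop :=
  exists k : Z, g = gpowZ x k.

(* [Q] together with [pi] is (a model of) the quotient G / N:
   pi is a surjective homomorphism with kernel exactly N. *)
Definition is_quotient_by {G Q : Group} (N : G -> Prop) (pi : G -> Q) : Prop :=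
  is_hom pi /\ (forall q : Q, exists g : G, pi g = q) /\
  (forall g : G, pi g = gone <-> N g).

Section Garside.
Variable G : Group.
Variable P : G -> Prop. (* the positive monoid G^+ inside G *)

Definition is_submonoid : Prop :=
  P gone /\ (forall x y, P x -> P y -> P (gmul x y)).

Definition generates_group : Prop :=
  forall H : G -> Prop, is_subgroup H -> (forall x, P x -> H x) -> forall x, H x.

Definition leL (a b : G) : Prop := exists c, P c /\ gmul a c = b.
Definition leR (a b : G) : Prop := exists c, P c /\ gmul c a = b.

Definition atomic : Prop :=
  forall x, P x -> exists N : nat, forall l : list G,
    (forall y, In y l -> P y /\ y <> gone) -> gprod l = x -> length l <= N.

Definition is_lattice (le : G -> G -> Prop) : Prop :=
  (forall a b, P a -> P b -> le a b -> le b a -> a = b) /\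
  (forall a b, P a -> P b -> exists c, P c /\ le c a /\ le c b /\
      forall d, P d -> le d a -> le d b -> le d c) /\
  (forall a b, P a -> P b -> exists c, P c /\ le a c /\ le b c /\
      forall d, P d -> le a d -> le b d -> le c d).

Definition garside_element (Delta : G) : Prop :=
  P Delta /\
  (forall a, P a -> (leL a Delta <-> leR a Delta)) /\
  finite_set (fun a => P a /\ leL a Delta) /\
  (forall x, P x -> exists l : list G,
      (forall a, In a l -> P a /\ leL a Delta) /\ gprod l = x).

(* Since P sits inside the group G and generates it, and
   Garside monoids satisfy the Ore condition, G is the group of fractions of P. *)
Definition garside_group (Delta : G) : Prop :=
  is_submonoid /\ generates_group /\ atomic /\
  is_lattice leL /\ is_lattice leR /\ garside_element Delta.

End Garside.

(* Main.v *)
Require Import Defs.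
From Stdlib Require Import ZArith List Lia Permutation Classical ClassicalEpsilon.
Import ListNotations.
Set Implicit Arguments.
Unset Strict Implicit.

Section GroupLemmas.
Variable G : Group.
Local Notation "x * y" := (gmul x y).

Lemma mul_cancel_l (g x y : G) : g * x = g * y -> x = y.
Proof.
  intro H. rewrite <- (gmul_1l G x), <- (gmul_1l G y), <- (gmul_Vl G g),
    <- !gmul_assoc, H. reflexivity.
Qed.

Lemma mul_cancel_r (g x y : G) : x * g = y * g -> x = y.
Proof.
  intro H. rewrite <- (gmul_1r G x), <- (gmul_1r G y), <- (gmul_Vr G g),
    !gmul_assoc, H. reflexivity.
Qed.

Lemma inv_uniq_l (x y : G) : y * x = gone -> y = ginv x.
Proof. intro H. apply (mul_cancel_r (g:=x)). rewrite H, gmul_Vl. reflexivity. Qed.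

Lemma inv_uniq_r (x y : G) : x * y = gone -> y = ginv x.
Proof. intro H. apply (mul_cancel_l (g:=x)). rewrite H, gmul_Vr. reflexivity. Qed.

Lemma inv_one : ginv (@gone G) = gone.
Proof. symmetry. apply inv_uniq_l. apply gmul_1l. Qed.

Lemma inv_mul (x y : G) : ginv (x * y) = ginv y * ginv x.
Proof.
  symmetry. apply inv_uniq_l. rewrite <- gmul_assoc, (gmul_assoc _ (ginv x)), gmul_Vl,
    gmul_1l, gmul_Vl. reflexivity.
Qed.

Lemma inv_inv (x : G) : ginv (ginv x) = x.
Proof. symmetry. apply inv_uniq_l. apply gmul_Vr. Qed.

Lemma mulKV (x y : G) : ginv x * (x * y) = y.
Proof. rewrite gmul_assoc, gmul_Vl, gmul_1l. reflexivity. Qed.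

Lemma mulVK (x y : G) : x * (ginv x * y) = y.
Proof. rewrite gmul_assoc, gmul_Vr, gmul_1l. reflexivity. Qed.

Lemma gpow_add (x : G) a b : gpow x (a + b) = gpow x a * gpow x b.
Proof.
  induction a; simpl. - rewrite gmul_1l. reflexivity.
  - rewrite IHa, gmul_assoc. reflexivity.
Qed.

Lemma gpow_comm (x : G) n : x * gpow x n = gpow x n * x.
Proof.
  induction n; simpl. - rewrite gmul_1l, gmul_1r. reflexivity.
  - rewrite <- gmul_assoc, <- IHn. reflexivity.
Qed.

Lemma gpow_one n : gpow (@gone G) n = gone.
Proof. induction n; simpl; [reflexivity| rewrite IHn, gmul_1l; reflexivity]. Qed.

Lemma gpowZ_nat (x : G) n : gpowZ x (Z.of_nat n) = gpow x n.
Proof.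
  destruct n. reflexivity. simpl. rewrite SuccNat2Pos.id_succ. reflexivity.
Qed.

Lemma gpowZ_negnat (x : G) n : gpowZ x (- Z.of_nat n)%Z = ginv (gpow x n).
Proof.
  destruct n. simpl. rewrite inv_one. reflexivity.
  simpl. rewrite SuccNat2Pos.id_succ. reflexivity.
Qed.

Lemma Z_nat_cases (a : Z) : exists n, (a = Z.of_nat n \/ a = - Z.of_nat n)%Z.
Proof. exists (Z.to_nat (Z.abs a)). lia. Qed.

Lemma gpowZ_succ (x : G) a : gpowZ x (a + 1) = gpowZ x a * x.
Proof.
  destruct (Z_nat_cases a) as [n [-> | ->]].
  - replace (Z.of_nat n + 1)%Z with (Z.of_nat (S n)) by lia.
    rewrite !gpowZ_nat. simpl. apply gpow_comm.
  - destruct n as [|n].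
    + simpl. rewrite gmul_1l, gmul_1r. reflexivity.
    + replace (- Z.of_nat (S n) + 1)%Z with (- Z.of_nat n)%Z by lia.
      rewrite !gpowZ_negnat. simpl. rewrite inv_mul, <- gmul_assoc, gmul_Vl, gmul_1r.
      reflexivity.
Qed.

Lemma gpowZ_pred (x : G) a : gpowZ x (a - 1) = gpowZ x a * ginv x.
Proof.
  pose proof (gpowZ_succ x (a - 1)) as H. replace (a - 1 + 1)%Z with a in H by lia.
  rewrite H, <- gmul_assoc, gmul_Vr, gmul_1r. reflexivity.
Qed.

Lemma gpowZ_add (x : G) a b : gpowZ x a * gpowZ x b = gpowZ x (a + b).
Proof.
  revert b. apply Z.peano_ind.
  - rewrite Z.add_0_r. apply gmul_1r.
  - intros b IH. rewrite <- Z.add_1_r, gpowZ_succ, gmul_assoc, IH,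
      Z.add_assoc, gpowZ_succ. reflexivity.
  - intros b IH. rewrite <- Z.sub_1_r, gpowZ_pred, gmul_assoc, IH,
      Z.add_sub_assoc, gpowZ_pred. reflexivity.
Qed.

Lemma gpowZ_opp (x : G) a : gpowZ x (- a)%Z = ginv (gpowZ x a).
Proof. apply inv_uniq_l. rewrite gpowZ_add. replace (-a + a)%Z with 0%Z by lia. reflexivity. Qed.

Lemma gpowZ_1 (x : G) : gpowZ x 1 = x.
Proof. simpl. apply gmul_1r. Qed.

Lemma central_gpow (x : G) n : central x -> central (gpow x n).
Proof.
  intros Hc g. induction n; simpl. - rewrite gmul_1l, gmul_1r. reflexivity.
  - rewrite gmul_assoc, Hc, <- gmul_assoc, IHn, gmul_assoc. reflexivity.
Qed.

Lemma central_inv (x : G) : central x -> central (ginv x).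
Proof.
  intros Hc g. apply (mul_cancel_l (g:=x)). rewrite gmul_assoc, <- Hc, <- gmul_assoc, gmul_Vr,
    gmul_1r, mulVK. reflexivity.
Qed.

Lemma central_gpowZ (x : G) a : central x -> central (gpowZ x a).
Proof.
  intro Hc. destruct a; simpl.
  - intro g. rewrite gmul_1l, gmul_1r. reflexivity.
  - apply central_gpow, Hc.
  - apply central_inv, central_gpow, Hc.
Qed.

Lemma subgroup_gpow (H : G -> Prop) y n : is_subgroup H -> H y -> H (gpow y n).
Proof.
  intros [H1 [Hm Hi]] Hy. induction n; simpl; auto.
Qed.

Lemma subgroup_gpowZ (H : G -> Prop) y a : is_subgroup H -> H y -> H (gpowZ y a).
Proof.
  intros Hs Hy. pose proof Hs as [H1 [Hm Hi]]. destruct a; simpl; [exact H1 | apply subgroup_gpow; auto | apply Hi; apply subgroup_gpow; auto].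
Qed.

End GroupLemmas.

Section Hom.
Variables G Q : Group.
Variable f : G -> Q.
Hypothesis hf : is_hom f.

Lemma hom_one : f gone = gone.
Proof.
  apply (mul_cancel_l (g:=(f gone))). rewrite <- hf, !gmul_1r. reflexivity.
Qed.

Lemma hom_inv x : f (ginv x) = ginv (f x).
Proof. apply inv_uniq_l. rewrite <- hf, gmul_Vl. apply hom_one. Qed.

Lemma hom_gpow x n : f (gpow x n) = gpow (f x) n.
Proof. induction n; simpl. apply hom_one. rewrite hf, IHn. reflexivity. Qed.

Lemma hom_gpowZ x a : f (gpowZ x a) = gpowZ (f x) a.
Proof. destruct a; simpl. apply hom_one. apply hom_gpow. rewrite hom_inv, hom_gpow. reflexivity. Qed.
End Hom.

Section Garside.
Variable G : Group.
Variable P : G -> Prop.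
Variable D : G.
Hypothesis hG : garside_group G P D.
Local Notation "x * y" := (gmul x y).

Lemma P1 : P gone.
Proof. destruct hG as [[h _] _]. exact h. Qed.
Lemma Pmul x y : P x -> P y -> P (x * y).
Proof. destruct hG as [[_ h] _]. apply h. Qed.
Lemma PD : P D.
Proof. destruct hG as [_ [_ [_ [_ [_ [h _]]]]]]. exact h. Qed.
Lemma Ppow n : P (gpow D n).
Proof. induction n; simpl. apply P1. apply Pmul; auto using PD. Qed.

Lemma simple_conj s : P s -> leL G P s D -> exists d, P d /\ D * s = d * D.
Proof.
  intros Ps Hs. destruct hG as [_ [_ [_ [_ [_ [_ [hiff _]]]]]]].
  destruct (proj1 (hiff s Ps) Hs) as [c [Pc Hc]].
  assert (Hc' : leL G P c D) by (exists s; auto).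
  destruct (proj1 (hiff c Pc) Hc') as [d [Pd Hd]].
  exists d. split; auto. rewrite <- Hc at 2. rewrite gmul_assoc, Hd. reflexivity.
Qed.

Lemma P_gen x : P x -> exists l, (forall a, In a l -> P a /\ leL G P a D) /\ gprod l = x.
Proof. destruct hG as [_ [_ [_ [_ [_ [_ [_ [_ h]]]]]]]]. apply h. Qed.

Lemma CF p : P p -> exists p', P p' /\ D * p = p' * D.
Proof.
  intro Pp. destruct (P_gen Pp) as [l [Hl <-]]. clear Pp.
  induction l as [|s l IH]; simpl.
  - exists gone. split. apply P1. rewrite gmul_1l, gmul_1r. reflexivity.
  - destruct (Hl s (or_introl eq_refl)) as [Ps Hs].
    destruct IH as [y' [Py' Hy']]. intros a Ha; apply Hl; simpl; auto.
    destruct (simple_conj Ps Hs) as [d [Pd Hd]].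
    exists (d * y'). split. apply Pmul; auto.
    rewrite gmul_assoc, Hd, <- gmul_assoc, Hy', gmul_assoc. reflexivity.
Qed.

Lemma CF_pow M p : P p -> exists p', P p' /\ gpow D M * p = p' * gpow D M.
Proof.
  revert p. induction M; intros p Pp; simpl.
  - exists p. split; auto. rewrite gmul_1l, gmul_1r. reflexivity.
  - destruct (IHM p Pp) as [p1 [Pp1 H1]]. destruct (CF Pp1) as [p2 [Pp2 H2]].
    exists p2. split; auto.
    rewrite <- gmul_assoc, H1, gmul_assoc, H2, gmul_assoc. reflexivity.
Qed.

Lemma DIV p : P p -> exists L c, P c /\ c * p = gpow D L.
Proof.
  intro Pp. destruct (P_gen Pp) as [l [Hl <-]]. clear Pp.
  induction l as [|s l IH]; simpl.
  - exists 0, gone. split. apply P1. apply gmul_1l.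
  - destruct (Hl s (or_introl eq_refl)) as [Ps Hs].
    destruct IH as [n [c' [Pc' Hc']]]. intros a Ha; apply Hl; simpl; auto.
    destruct hG as [_ [_ [_ [_ [_ [_ [hiff _]]]]]]].
    destruct (proj1 (hiff s Ps) Hs) as [c1 [Pc1 Hc1]].
    destruct (CF Pc') as [c'' [Pc'' Hc'']].
    exists (S n), (c'' * c1). split. apply Pmul; auto.
    simpl. rewrite <- Hc', (gmul_assoc _ D c'), Hc'', <- Hc1, !gmul_assoc.
    reflexivity.
Qed.

Lemma gen_groupP : generates_group G P.
Proof. destruct hG as [_ [h _]]. exact h. Qed.

Lemma shiftP g : exists N, P (gpow D N * g).
Proof.
  apply (gen_groupP (H := fun g => exists N, P (gpow D N * g))).
  - split; [|split].
    + exists 0. simpl. rewrite gmul_1l. apply P1.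
    + intros a b [N Ha] [M Hb]. destruct (CF_pow M Ha) as [p' [Pp' Hp']].
      exists (M + N). rewrite gpow_add, <- gmul_assoc, (gmul_assoc _ (gpow D N)),
        (gmul_assoc _ (gpow D M)), Hp', <- gmul_assoc. apply Pmul; auto.
    + intros a [N Ha]. destruct (DIV Ha) as [L [c [Pc Hc]]].
      exists L. rewrite <- Hc, <- !gmul_assoc, gmul_Vr, gmul_1r.
      apply Pmul; auto using Ppow.
  - intros x Px. exists 0. simpl. rewrite gmul_1l. exact Px.
Qed.

Lemma shift_mono N k g : P (gpow D N * g) -> P (gpow D (k + N) * g).
Proof. intro H. rewrite gpow_add, <- gmul_assoc. apply Pmul; auto using Ppow. Qed.

Lemma shift_list l : exists N, forall s, In s l -> P (gpow D N * s).
Proof.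
  induction l as [|a l [N2 IH]].
  - exists 0. intros s [].
  - destruct (shiftP a) as [N1 H1]. exists (N1 + N2). intros s [<-|Hs].
    + rewrite Nat.add_comm. apply shift_mono; auto.
    + apply shift_mono; auto.
Qed.

Definition le (x y : G) := leL G P x y.

Lemma le_refl x : le x x.
Proof. exists gone. split. apply P1. apply gmul_1r. Qed.

Lemma le_trans x y z : le x y -> le y z -> le x z.
Proof.
  intros [c [Pc Hc]] [d [Pd Hd]]. exists (c * d). split. apply Pmul; auto.
  rewrite gmul_assoc, Hc; auto.
Qed.

Lemma le_mul g x y : le x y -> le (g * x) (g * y).
Proof. intros [c [Pc Hc]]. exists c. split; auto. rewrite <- gmul_assoc, Hc. reflexivity. Qed.

Lemma le_mul_inv g x y : le (g * x) (g * y) -> le x y.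
Proof.
  intro H. apply (le_mul (ginv g)) in H. rewrite !mulKV in H. exact H.
Qed.

Lemma le_antisym x y : le x y -> le y x -> x = y.
Proof.
  intros [c [Pc Hc]] [d [Pd Hd]].
  destruct hG as [_ [_ [_ [[hanti _] _]]]].
  assert (Hcd : c * d = gone).
  { apply (mul_cancel_l (g:=x)). rewrite gmul_1r, gmul_assoc, Hc, Hd. reflexivity. }
  assert (c = gone).
  { symmetry. apply hanti; auto using P1.
    - exists c. split; auto. apply gmul_1l.
    - exists d. split; auto. }
  subst c. rewrite gmul_1r in Hc. exact Hc.
Qed.

Definition is_lub (S : list G) (c : G) :=
  (forall s, In s S -> le s c) /\ (forall d, (forall s, In s S -> le s d) -> le c d).

Lemma lub_P a l : P a -> (forall s, In s l -> P s) -> exists c, P c /\ is_lub (a :: l) c.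
Proof.
  revert a. induction l as [|b l IH]; intros a Pa Hl.
  - exists a. split; auto. split.
    + intros s [<-|[]]. apply le_refl.
    + intros d Hd. apply Hd. left. reflexivity.
  - destruct (IH b (Hl b (or_introl eq_refl))) as [c0 [Pc0 [Hub Hleast]]].
    { intros s Hs; apply Hl; right; auto. }
    destruct hG as [_ [_ [_ [[_ [_ hjoin]] _]]]].
    destruct (hjoin a c0 Pa Pc0) as [c [Pc [Hac [Hc0c Hj]]]].
    exists c. split; auto. split.
    + intros s [<-|Hs]. exact Hac. apply le_trans with c0; auto.
    + intros d Hd. assert (Pd : P d).
      { destruct (Hd a (or_introl eq_refl)) as [e [Pe He]]. rewrite <- He. apply Pmul; auto. }
      apply Hj; auto. apply Hd. left; auto.
      apply Hleast. intros s Hs. apply Hd. right; auto.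
Qed.

Lemma lub_exists a l : exists c, is_lub (a :: l) c.
Proof.
  destruct (shift_list (a :: l)) as [N HN].
  set (g := gpow D N).
  destruct (@lub_P (g * a) (map (gmul g) l)) as [c' [_ [Hub Hleast]]].
  - apply HN. left; auto.
  - intros s Hs. apply in_map_iff in Hs. destruct Hs as [x [<- Hx]]. apply HN. right; auto.
  - exists (ginv g * c'). split.
    + intros s Hs. apply (le_mul_inv (g:=g)). rewrite mulVK. apply Hub.
      destruct Hs as [<-|Hs]. left; auto. right. apply in_map; auto.
    + intros d Hd. apply (le_mul_inv (g:=g)). rewrite mulVK. apply Hleast.
      intros s [<-|Hs]. apply le_mul, Hd; left; auto.
      apply in_map_iff in Hs. destruct Hs as [x [<- Hx]]. apply le_mul, Hd. right; auto.
Qed.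

Lemma lub_fixed S c x : is_lub S c -> (forall s, In s S -> In (x * s) S) ->
  (forall s, In s S -> In (ginv x * s) S) -> x = gone.
Proof.
  intros [Hub Hleast] H1 H2.
  assert (E : x * c = c).
  { apply le_antisym.
    - apply (le_mul_inv (g:=ginv x)). rewrite mulKV. apply Hleast.
      intros s Hs. apply (le_mul_inv (g:=x)). rewrite mulVK. apply Hub; auto.
    - apply Hleast. intros s Hs. rewrite <- (mulVK x s). apply le_mul, Hub; auto. }
  apply (mul_cancel_r (g:=c)). rewrite gmul_1l. exact E.
Qed.

Lemma torsion_free (x : G) n : 0 < n -> gpow x n = gone -> x = gone.
Proof.
  intros Hn Hx. destruct n as [|n']; [lia|].
  destruct (lub_exists (gpow x 0) (map (gpow x) (seq 1 n'))) as [c Hc].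
  assert (HS : forall s, In s (gpow x 0 :: map (gpow x) (seq 1 n')) <->
               exists i, i < S n' /\ s = gpow x i).
  { intro s. change (gpow x 0 :: map (gpow x) (seq 1 n')) with (map (gpow x) (seq 0 (S n'))).
    rewrite in_map_iff. split.
    - intros [i [<- Hi]]. apply in_seq in Hi. exists i. split; [lia|auto].
    - intros [i [Hi ->]]. exists i. split; auto. apply in_seq. lia. }
  apply (lub_fixed Hc).
  - intros s Hs. apply HS in Hs. destruct Hs as [i [Hi ->]]. apply HS.
    destruct (Nat.eq_dec (S i) (S n')) as [E|E].
    + exists 0. split. lia. injection E as ->. simpl in *. exact Hx.
    + exists (S i). split. lia. reflexivity.
  - intros s Hs. apply HS in Hs. destruct Hs as [i [Hi ->]]. apply HS.
    destruct i as [|i].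
    + exists n'. split. lia. simpl. rewrite gmul_1r. symmetry. apply inv_uniq_r. exact Hx.
    + exists i. split. lia. simpl. apply mulKV.
Qed.

End Garside.

Lemma nodup_map_in (A B : Type) (f : A -> B) (l : list A) :
  NoDup l -> (forall x y, In x l -> In y l -> f x = f y -> x = y) -> NoDup (map f l).
Proof.
  induction 1 as [|a l Ha Hl IH]; intros Hinj; simpl; constructor.
  - intro Hin. apply in_map_iff in Hin. destruct Hin as [x [Hx Hxl]].
    assert (x = a) by (apply Hinj; simpl; auto). subst. contradiction.
  - apply IH. intros x y Hx Hy. apply Hinj; simpl; auto.
Qed.

Lemma nodup_filter (A : Type) (H : A -> Prop) (l : list A) :
  exists l', NoDup l' /\ forall x, In x l' <-> (In x l /\ H x).
Proof.
  induction l as [|a l [l' [Hn Hi]]].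
  - exists []. split. constructor. intros x; simpl; tauto.
  - destruct (classic (H a /\ ~ In a l')) as [[Ha Hna]|Hno].
    + exists (a :: l'). split. constructor; auto.
      intro x. simpl. rewrite Hi. split.
      * intros [<-|[]]; auto.
      * intros [[<-|Hx] Hx']; auto.
    + exists l'. split; auto. intro x. rewrite Hi. simpl. split.
      * intros [Hx Hx']; auto.
      * intros [[Ex|Hx] Hx'].
        -- subst x. destruct (classic (In a l')) as [Hin|Hin]; [apply Hi in Hin; exact Hin|].
           exfalso. apply Hno. split; assumption.
        -- split; assumption.
Qed.

Lemma nat_min (Pn : nat -> Prop) : (exists n, Pn n) -> exists n, Pn n /\ forall k, Pn k -> n <= k.
Proof.
  intros [n Hn]. destruct (classic (exists m, Pn m /\ forall k, Pn k -> m <= k)) as [H|H]; auto.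
  exfalso.
  assert (A : forall n k, k <= n -> ~ Pn k).
  { induction n0; intros k Hk Hp.
    - apply H. exists k. split; auto. intros. lia.
    - destruct (Nat.le_gt_cases k n0) as [Hle|Hgt]. exact (IHn0 k Hle Hp).
      apply H. exists k. split; auto. intros j Hj.
      destruct (Nat.le_gt_cases k j); auto. exfalso. apply (IHn0 j); auto. lia. }
  exact (A n n (le_n n) Hn).
Qed.

Definition sumZ (l : list Z) := fold_right Z.add 0%Z l.

Lemma sumZ_perm l l' : Permutation l l' -> sumZ l = sumZ l'.
Proof. induction 1; simpl in *; lia. Qed.

Lemma sumZ_add (A : Type) (f g : A -> Z) l :
  sumZ (map (fun x => f x + g x)%Z l) = (sumZ (map f l) + sumZ (map g l))%Z.
Proof. induction l; simpl; lia. Qed.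

Lemma sumZ_const (A : Type) (a : Z) (l : list A) :
  sumZ (map (fun _ => a) l) = (a * Z.of_nat (length l))%Z.
Proof. induction l; simpl length; simpl; lia. Qed.

Lemma pigeon (Q : Group) (H : Q -> Prop) (l : list Q) (y : Q) :
  is_subgroup H -> (forall x, H x -> In x l) -> H y -> exists k, 0 < k /\ gpow y k = gone.
Proof.
  intros Hs Hl Hy.
  destruct (classic (exists i j, i < j /\ gpow y i = gpow y j)) as [[i [j [Hij E]]]|Hno].
  - exists (j - i). split. lia.
    apply (mul_cancel_r (g:=gpow y i)). rewrite <- gpow_add, gmul_1l.
    replace (j - i + i) with j by lia. symmetry; exact E.
  - exfalso.
    assert (Nd : NoDup (map (gpow y) (seq 0 (S (length l))))).
    { apply nodup_map_in. apply seq_NoDup. intros a b _ _ E.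
      destruct (Nat.lt_total a b) as [h|[h|h]]; auto; exfalso; apply Hno; eauto. }
    apply NoDup_incl_length with (l' := l) in Nd.
    + rewrite length_map, length_seq in Nd. lia.
    + intros x Hx. apply in_map_iff in Hx. destruct Hx as [i [<- _]].
      apply Hl. apply subgroup_gpow; auto.
Qed.

Section Transfer.
Variables G Q : Group.
Variable pi : G -> Q.
Variable z : G.
Hypothesis hhom : is_hom pi.
Hypothesis hsurj : forall q, exists g, pi g = q.
Hypothesis hker : forall g, pi g = gone <-> cyclic_subgroup z g.
Hypothesis hcent : central z.
Hypothesis htf : forall (x : G) n, 0 < n -> gpow x n = gone -> x = gone.
Hypothesis hz : z <> gone.
Variable H : Q -> Prop.
Hypothesis hH : is_subgroup H.
Variable lQ : list Q.
Hypothesis hlQnd : NoDup lQ.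
Hypothesis hlQ : forall q, In q lQ <-> H q.
Local Notation "x * y" := (gmul x y).

Lemma powZ_inj a b : gpowZ z a = gpowZ z b -> a = b.
Proof.
  intro E. assert (E2 : gpowZ z (a - b) = gone).
  { replace (a - b)%Z with (a + - b)%Z by lia. rewrite <- gpowZ_add, gpowZ_opp, E, gmul_Vr.
    reflexivity. }
  destruct (Z_nat_cases (a - b)) as [n [Hc|Hc]]; rewrite Hc in E2.
  - destruct n. lia. exfalso. apply hz. apply (htf (n := S n)). lia.
    rewrite gpowZ_nat in E2. exact E2.
  - destruct n. lia. exfalso. apply hz. apply (htf (n := S n)). lia.
    rewrite gpowZ_negnat in E2. rewrite <- (inv_inv (gpow z (S n))), E2. apply inv_one.
Qed.

Definition sec (q : Q) : G := proj1_sig (constructive_indefinite_description _ (hsurj q)).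
Lemma sec_spec q : pi (sec q) = q.
Proof. unfold sec. destruct constructive_indefinite_description. simpl. exact e. Qed.

Definition ee (h : G) (q : Q) : Z :=
  epsilon (inhabits 0%Z) (fun a => h * sec q = sec (pi h * q) * gpowZ z a).

Lemma ee_spec h q : h * sec q = sec (pi h * q) * gpowZ z (ee h q).
Proof.
  unfold ee. apply epsilon_spec.
  set (k := ginv (sec (pi h * q)) * (h * sec q)).
  assert (Hk : pi k = gone).
  { unfold k. rewrite !hhom, hom_inv, !sec_spec; auto. rewrite gmul_Vl. reflexivity. }
  apply hker in Hk. destruct Hk as [a Ha]. exists a. rewrite <- Ha. unfold k.
  rewrite mulVK. reflexivity.
Qed.

Lemma ee_uniq h q a : h * sec q = sec (pi h * q) * gpowZ z a -> ee h q = a.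
Proof.
  intro E. apply powZ_inj. apply (mul_cancel_l (g:=sec (pi h * q))). rewrite <- E.
  symmetry. apply ee_spec.
Qed.

Lemma ee_mul a b q : ee (a * b) q = (ee a (gmul (pi b) q) + ee b q)%Z.
Proof.
  apply ee_uniq. rewrite <- gmul_assoc, ee_spec, gmul_assoc, ee_spec, <- gmul_assoc,
    gpowZ_add, hhom, gmul_assoc. reflexivity.
Qed.

Lemma ee_central a q : ee (gpowZ z a) q = a.
Proof.
  apply ee_uniq. assert (E : pi (gpowZ z a) = gone) by (apply hker; exists a; auto).
  rewrite E, gmul_1l. symmetry. apply central_gpowZ, hcent.
Qed.

Definition V (h : G) : Z := sumZ (map (ee h) lQ).

Lemma V_mul a b : H (pi b) -> V (a * b) = (V a + V b)%Z.
Proof.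
  intro Hb. unfold V.
  rewrite (map_ext _ _ (ee_mul a b)), sumZ_add. f_equal.
  rewrite <- (map_map (fun q => pi b * q) (ee a)). apply sumZ_perm, Permutation_map.
  apply NoDup_Permutation; auto.
  - apply nodup_map_in; auto. intros x y _ _ E. apply mul_cancel_l in E. exact E.
  - intro x. rewrite in_map_iff, hlQ. split.
    + intros [q [<- Hq]]. apply hlQ in Hq. destruct hH as [_ [Hm _]]. auto.
    + intro Hx. exists (ginv (pi b) * x). split. apply mulVK.
      apply hlQ. destruct hH as [_ [Hm Hi]]. auto.
Qed.

Lemma V_central a : V (gpowZ z a) = (a * Z.of_nat (length lQ))%Z.
Proof.
  unfold V. rewrite (map_ext _ (fun _ => a) (ee_central a)). apply sumZ_const.
Qed.

Lemma V_one : V gone = 0%Z.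
Proof. change (@gone G) with (gpowZ z 0). rewrite V_central. lia. Qed.

Lemma Ht_gpow h n : H (pi h) -> H (pi (gpow h n)).
Proof. intro Hh. rewrite hom_gpow; auto. apply subgroup_gpow; auto. Qed.

Lemma V_gpow h n : H (pi h) -> V (gpow h n) = (Z.of_nat n * V h)%Z.
Proof.
  intro Hh. induction n; simpl gpow.
  - rewrite V_one. lia.
  - rewrite V_mul by (apply Ht_gpow; auto). rewrite IHn. lia.
Qed.

Lemma V_inv h : H (pi h) -> V (ginv h) = (- V h)%Z.
Proof.
  intro Hh. pose proof (V_mul (ginv h) Hh) as E. rewrite gmul_Vl, V_one in E. lia.
Qed.

Lemma V_gpowZ h a : H (pi h) -> V (gpowZ h a) = (a * V h)%Z.
Proof.
  intro Hh. destruct a; simpl gpowZ.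
  - rewrite V_one. lia.
  - rewrite V_gpow; auto. lia.
  - rewrite V_inv, V_gpow; auto. lia. apply Ht_gpow; auto.
Qed.

Lemma len_pos : (0 < Z.of_nat (length lQ))%Z.
Proof.
  pose proof (proj2 (hlQ gone) (proj1 hH)) as Hin.
  destruct lQ; [destruct Hin|simpl length; lia].
Qed.

Lemma V_zero h : H (pi h) -> V h = 0%Z -> h = gone.
Proof.
  intros Hh Vh. destruct (pigeon hH (l := lQ) (y := pi h)) as [k [Hk Ek]]; auto.
  { intros x; apply hlQ. }
  rewrite <- hom_gpow in Ek; auto. apply hker in Ek. destruct Ek as [a Ea].
  apply (htf (n := k)); auto. rewrite Ea.
  assert (E : V (gpow h k) = V (gpowZ z a)) by (rewrite Ea; auto).
  rewrite V_gpow, V_central, Vh in E; auto. pose proof len_pos.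
  assert (a = 0%Z) by nia. subst. reflexivity.
Qed.

Lemma cyclic_main : is_cyclic H.
Proof.
  pose (Pn := fun d => exists h, H (pi h) /\ V h = Z.of_nat d /\ 0 < d).
  destruct (@nat_min Pn) as [d0 [[h0 [Hh0 [Vh0 Hd0]]] Hmin]].
  { exists (Z.to_nat (Z.of_nat (length lQ))). exists z.
    assert (Ez : pi z = gone) by (apply hker; exists 1%Z; symmetry; apply gpowZ_1).
    split. rewrite Ez. destruct hH; auto.
    pose proof len_pos. split.
    - rewrite <- (gpowZ_1 z) at 1. rewrite V_central. lia.
    - lia. }
  exists (pi h0). split; auto. intros x Hx.
  set (g := sec x). assert (Hg : pi g = x) by apply sec_spec.
  set (a := V g). set (dd := V h0).
  assert (Hdd : (0 < dd)%Z) by (unfold dd; lia).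
  pose proof (Z.div_mod a dd ltac:(lia)) as Hdm. pose proof (Z.mod_pos_bound a dd Hdd) as Hb.
  set (q := (a / dd)%Z) in *. set (r := (a mod dd)%Z) in *.
  set (g' := g * gpowZ h0 (- q)).
  assert (Hg' : H (pi g')).
  { unfold g'. rewrite hhom, hom_gpowZ, Hg; auto. destruct hH as [_ [Hm _]].
    apply Hm; auto. apply subgroup_gpowZ; auto. }
  assert (Vg' : V g' = r).
  { unfold g'. rewrite V_mul, V_gpowZ; auto. fold a dd. lia.
    rewrite hom_gpowZ; auto. apply subgroup_gpowZ; auto. }
  assert (Hr : r = 0%Z).
  { destruct (Z.eq_dec r 0) as [|Hne]; auto. exfalso.
    assert (Pn (Z.to_nat r)) as Hp by (exists g'; split; auto; split; lia).
    apply Hmin in Hp. lia. }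
  assert (E : g' = gone) by (apply V_zero; auto; lia).
  exists q. rewrite <- Hg, <- hom_gpowZ; auto. f_equal.
  unfold g' in E. rewrite gpowZ_opp in E. apply (mul_cancel_r (g:=ginv (gpowZ h0 q))).
  rewrite E, gmul_Vr. reflexivity.
Qed.

End Transfer.

Lemma gpowZ_gone (G : Group) a : gpowZ (@gone G) a = gone.
Proof. destruct a; simpl; rewrite ?gpow_one; auto using inv_one. Qed.

Unset Implicit Arguments.
Set Strict Implicit.

Theorem mainTheorem9 (G : Group) (P : G -> Prop) (Delta : G) (m : nat)
  (hG : garside_group G P Delta)
  (hm_pos : 0 < m)
  (hm_central : central (gpow Delta m))
  (hm_min : forall k : nat, 0 < k -> k < m -> ~ central (gpow Delta k))
  (Q : Group) (pi : G -> Q)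
  (hQ : is_quotient_by (cyclic_subgroup (gpow Delta m)) pi) :
  forall H : Q -> Prop, is_subgroup H -> finite_set H -> is_cyclic H.
Proof.
  intros H hH [l hl].
  destruct hQ as [hhom [hsurj hker]].
  assert (htf : forall (x : G) n, 0 < n -> gpow x n = gone -> x = gone).
  { intros x n Hn Hx. exact (torsion_free hG Hn Hx). }
  destruct (classic (gpow Delta m = gone)) as [Ez|Ez].
  - exists gone. split. exact (proj1 hH). intros x Hx. exists 0%Z. simpl.
    destruct (pigeon hH (l := l) (y := x)) as [k [Hk Ek]]; auto.
    destruct (hsurj x) as [g <-].
    rewrite <- hom_gpow in Ek; auto. apply hker in Ek. destruct Ek as [a Ea].
    rewrite Ez, gpowZ_gone in Ea. rewrite (htf g k Hk Ea). apply hom_one; auto.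
  - destruct (nodup_filter H l) as [lQ [Hnd Hi]].
    apply (@cyclic_main G Q pi (gpow Delta m) hhom hsurj hker hm_central htf Ez H hH lQ Hnd).
    intro q. rewrite Hi. split. tauto. intro Hq. split; auto.
Qed.
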